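(* Let $\vec x$ be an optimal solution of the LP $\max\{\vec w\cdot\vec x:\sum_j u_{i,j}x_j\le b_i\ \forall i,\ \vec x\in[0,1]^n\}$ and run the algorithm $\textsc{SKSP}(\alpha_1,\beta_1,\alpha_2)$ described in the context. Then for every item $j$, the event $\mathrm{ad}_{2,j}$ that $j$ is added in the second chance satisfies $\Pr[\mathrm{ad}_{2,j}]\ge\frac{x_j}{k}\alpha_2\left(1-\frac{\alpha_1x_j}{k}-\beta_1-\frac{\alpha_2}{2}\right)$.
   Context: Stochastic $k$-set packing: $n$ items; item $j$ has random weight $W_j\ge0$ and random size vector $S_j\in\{0,1\}^m$, the pairs $(W_j,S_j)$ mutually independent across $j$; $u_{i,j}=\mathbb E[S_{i,j}]$, $w_j=\mathbb E[W_j]$; $S_{i,j}=0$ a.s. outside a known set $\mathcal C(j)$ with $|\mathcal C(j)|\le k$; capacities $\vec b\in\mathbb Z_+^m$. An item $j$ is safe if every $i\in\mathcal C(j)$ has at least one unit of remaining capacity; a probed item is irrevocably added and its realization observed. Algorithm $\textsc{SKSP}(\alpha_1,\beta_1,\alpha_2)$ with $\alpha_1,\alpha_2\ge0$ and $0\le\beta_1\le\alpha_1(1-\alpha_1/2)$: First chance: generate independent Bernoulli $Y_{1,j}$ with mean $\alpha_1x_j/k$, follow a uniformly random order over $[n]$ and add $j$ iff $Y_{1,j}=1$ and $j$ is safe, where (by simulation-based attenuation, i.e. adding with a suitable extra probability) each item is added in this first chance with probability exactly $\beta_1x_j/k$. Second chance: generate independent Bernoulli $Y_{2,j}$ with mean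 $\alpha_2x_j/k$, follow an independent uniformly random order over $[n]$ and add $j$ iff $j$ is safe, $Y_{1,j}=0$ and $Y_{2,j}=1$. *)

(* Defs.v *)
From mathcomp Require Import all_boot all_order all_algebra all_fingroup.
Set Implicit Arguments. Unset Strict Implicit. Unset Printing Implicit Defensive.
Import Order.TTheory GRing.Theory Num.Theory.
Local Open Scope ring_scope.

(* Sample space of one run of SKSP(alpha1,beta1,alpha2).              *)
(*  - S  : realized size vectors S_j in {0,1}^m of the n items         *)
(*  - Y1 : first-chance Bernoulli coins Y_{1,j}                        *)
(*  - Z  : attenuation coins; Z (j,p) is the extra coin used when item *)
(*         j is met at position p of the first-chance order            *)
(*  - s1 : first-chance uniformly random order (s1 p = item at pos p)  *)
(*  - Y2 : second-chance Bernoulli coins Y_{2,j}                       *)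
(*  - s2 : second-chance uniformly random order                        *)
Definition outcome (n m : nat) : finType :=
  ({ffun 'I_n -> {ffun 'I_m -> bool}} * {ffun 'I_n -> bool}
   * {ffun 'I_n * 'I_n -> bool} * {perm 'I_n} * {ffun 'I_n -> bool}
   * {perm 'I_n})%type.

Section Proj.
Variables n m : nat.
Definition oS  (w : outcome n m) := w.1.1.1.1.1.
Definition oY1 (w : outcome n m) := w.1.1.1.1.2.
Definition oZ  (w : outcome n m) := w.1.1.1.2.
Definition os1 (w : outcome n m) := w.1.1.2.
Definition oY2 (w : outcome n m) := w.1.2.
Definition os2 (w : outcome n m) := w.2.
End Proj.

Definition bern (R : numFieldType) (p : R) (b : bool) : R := if b then p else 1 - p.

Definition weight (R : numFieldType) (n m : nat)
  (pS : 'I_n -> {ffun 'I_m -> bool} -> R) (p1 p2 : 'I_n -> R)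
  (q : 'I_n -> 'I_n -> R) (w : outcome n m) : R :=
  (\prod_(j < n) pS j (oS w j)) *
  (\prod_(j < n) bern (p1 j) (oY1 w j)) *
  (\prod_(jp : 'I_n * 'I_n) bern (q jp.1 jp.2) (oZ w jp)) *
  (n`!%:R)^-1 *
  (\prod_(j < n) bern (p2 j) (oY2 w j)) *
  (n`!%:R)^-1.

Definition Pr (R : numFieldType) (n m : nat)
  (pS : 'I_n -> {ffun 'I_m -> bool} -> R) (p1 p2 : 'I_n -> R)
  (q : 'I_n -> 'I_n -> R) (E : pred (outcome n m)) : R :=
  \sum_(w : outcome n m) weight pS p1 p2 q w * (E w)%:R.

(* state: remaining capacities and set of items added so far *)
Definition state (n m : nat) := ({ffun 'I_m -> nat} * {set 'I_n})%type.

Definition safe (m : nat) (Cj : {set 'I_m}) (rem : {ffun 'I_m -> nat}) : bool :=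
  [forall i in Cj, 0 < rem i]%N.

Definition consume (m : nat) (rem : {ffun 'I_m -> nat}) (s : {ffun 'I_m -> bool})
  : {ffun 'I_m -> nat} := [ffun i => (rem i - s i)%N].

Definition add_item (n m : nat) (st : state n m) (j : 'I_n) (s : {ffun 'I_m -> bool})
  : state n m := (consume st.1 s, j |: st.2).

Definition first_step (n m : nat) (C : 'I_n -> {set 'I_m}) (w : outcome n m)
  (st : state n m) (p : 'I_n) : state n m :=
  let j := os1 w p in
  if [&& oY1 w j, safe (C j) st.1 & oZ w (j, p)] then add_item st j (oS w j) else st.

Definition first_chance (n m : nat) (b : 'I_m -> nat) (C : 'I_n -> {set 'I_m})
  (w : outcome n m) : state n m :=
  foldl (first_step C w) ([ffun i => b i], set0) (enum 'I_n).

Definition second_step (n m : nat) (C : 'I_n -> {set 'I_m}) (w : outcome n m)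
  (st : state n m) (p : 'I_n) : state n m :=
  let j := os2 w p in
  if [&& safe (C j) st.1, ~~ oY1 w j & oY2 w j] then add_item st j (oS w j) else st.

Definition second_chance (n m : nat) (b : 'I_m -> nat) (C : 'I_n -> {set 'I_m})
  (w : outcome n m) : state n m :=
  foldl (second_step C w) (((first_chance b C w).1), set0) (enum 'I_n).

Definition ad1 (n m : nat) (b : 'I_m -> nat) (C : 'I_n -> {set 'I_m}) (j : 'I_n)
  : pred (outcome n m) := fun w => j \in (first_chance b C w).2.
Definition ad2 (n m : nat) (b : 'I_m -> nat) (C : 'I_n -> {set 'I_m}) (j : 'I_n)
  : pred (outcome n m) := fun w => j \in (second_chance b C w).2.

Definition umean (R : numFieldType) (n m : nat) (pS : 'I_n -> {ffun 'I_m -> bool} -> R)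
  (i : 'I_m) (j : 'I_n) : R := \sum_(s : {ffun 'I_m -> bool}) pS j s * (s i)%:R.

Definition lp_feasible (R : numFieldType) (n m : nat)
  (pS : 'I_n -> {ffun 'I_m -> bool} -> R) (b : 'I_m -> nat) (x : 'I_n -> R) : Prop :=
  (forall j, 0 <= x j <= 1) /\
  (forall i, \sum_(j < n) umean pS i j * x j <= (b i)%:R).

Definition lp_optimal (R : numFieldType) (n m : nat)
  (pS : 'I_n -> {ffun 'I_m -> bool} -> R) (b : 'I_m -> nat) (w : 'I_n -> R)
  (x : 'I_n -> R) : Prop :=
  lp_feasible pS b x /\
  (forall y, lp_feasible pS b y -> \sum_(j < n) w j * y j <= \sum_(j < n) w j * x j).

(* Main.v *)
Require Import Defs.
From mathcomp Require Import all_boot all_order all_algebra all_fingroup.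
From mathcomp Require Import ring lra zify.
Set Implicit Arguments. Unset Strict Implicit. Unset Printing Implicit Defensive.
Import Order.TTheory GRing.Theory Num.Theory.
Local Open Scope ring_scope.

Lemma resample (R : realFieldType) (U T : finType) (wt : U -> R) (mu : T -> R)
  (get : U -> T) (upd : U -> T -> U) (g : T -> R) (h : U -> R) :
  \sum_t mu t = 1 ->
  (forall w t, wt (upd w t) * mu (get w) = wt w * mu t) ->
  (forall w t, get (upd w t) = t) ->
  (forall w t, upd (upd w t) (get w) = w) ->
  (forall w t, h (upd w t) = h w) ->
  \sum_w wt w * (g (get w) * h w) = (\sum_t mu t * g t) * \sum_w wt w * h w.
Proof.
move=> mu1 wtE getE updK hE.
transitivity (\sum_w \sum_t wt w * mu t * g (get w) * h w).
  apply: eq_bigr => w _; rewrite -[LHS]mulr1 -mu1 mulr_sumr.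
  by apply: eq_bigr => t _; ring.
rewrite pair_bigA /=.
pose phi := fun p : U * T => (upd p.1 p.2, get p.1).
have phiK : involutive phi by case=> w t; rewrite /phi /= getE updK.
rewrite (reindex_inj (inv_inj phiK)) /=.
transitivity (\sum_(p : U * T) (wt p.1 * h p.1) * (mu p.2 * g p.2)).
  apply: eq_bigr => -[w t] _ /=.
  rewrite getE hE.
  have := wtE w t.  move=> e.
  transitivity ((wt (upd w t) * mu (get w)) * g t * h w); first by ring.
  rewrite e; ring.
rewrite -(pair_bigA _ (fun w t => (wt w * h w) * (mu t * g t))) /=.
rewrite mulrC mulr_suml; apply: eq_bigr => w _.
by rewrite mulr_sumr.
Qed.

Definition fupd (I T : finType) (F : {ffun I -> T}) (j : I) (t : T) : {ffun I -> T} :=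
  [ffun l => if l == j then t else F l].

Lemma fupd_get (I T : finType) (F : {ffun I -> T}) j t : fupd F j t j = t.
Proof. by rewrite ffunE eqxx. Qed.
Lemma fupd_other (I T : finType) (F : {ffun I -> T}) j t l : l != j -> fupd F j t l = F l.
Proof. by rewrite ffunE => /negbTE ->. Qed.
Lemma fupdK (I T : finType) (F : {ffun I -> T}) j t : fupd (fupd F j t) j (F j) = F.
Proof. by apply/ffunP => l; rewrite !ffunE; case: eqP => // ->. Qed.

Lemma prod_fupd (R : realFieldType) (I T : finType) (mu : I -> T -> R) (F : {ffun I -> T}) j t :
  (\prod_l mu l (fupd F j t l)) * mu j (F j) = (\prod_l mu l (F l)) * mu j t.
Proof.
rewrite (bigD1 j) //= [in RHS](bigD1 j) //= fupd_get.
rewrite (eq_bigr (fun l => mu l (F l))); first by ring.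
by move=> l /fupd_other ->.
Qed.

Section Outcomes.
Variables (R : realFieldType) (n m : nat).
Variables (pS : 'I_n -> {ffun 'I_m -> bool} -> R) (p1 p2 : 'I_n -> R) (q : 'I_n -> 'I_n -> R).

Definition Ex (f : outcome n m -> R) := \sum_w weight pS p1 p2 q w * f w.

Definition updS (w : outcome n m) j t : outcome n m :=
  (((((fupd (oS w) j t, oY1 w), oZ w), os1 w), oY2 w), os2 w).
Definition updY1 (w : outcome n m) j t : outcome n m :=
  (((((oS w, fupd (oY1 w) j t), oZ w), os1 w), oY2 w), os2 w).
Definition updY2 (w : outcome n m) j t : outcome n m :=
  (((((oS w, oY1 w), oZ w), os1 w), fupd (oY2 w) j t), os2 w).

Lemma bern_sum (p : R) : \sum_b bern p b = 1.
Proof. by rewrite big_bool /=; ring. Qed.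

Lemma outcome_eta (w : outcome n m) :
  w = (((((oS w, oY1 w), oZ w), os1 w), oY2 w), os2 w).
Proof. by case: w => [[[[[? ?] ?] ?] ?] ?]. Qed.

Lemma ExS j (g : {ffun 'I_m -> bool} -> R) h :
  \sum_s pS j s = 1 ->
  (forall w t, h (updS w j t) = h w) ->
  Ex (fun w => g (oS w j) * h w) = (\sum_s pS j s * g s) * Ex h.
Proof.
move=> H1 hE; apply: (resample (upd := fun w t => updS w j t)) => //.
- move=> w t; rewrite /weight /=.
  have e := prod_fupd pS (oS w) j t.
  transitivity ((\prod_l pS l (fupd (oS w) j t l) * pS j (oS w j)) *
    ((\prod_(j0 < n) bern (p1 j0) (oY1 w j0)) *
    (\prod_jp bern (q jp.1 jp.2) (oZ w jp)) * (n`!%:R)^-1 *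
    (\prod_(j0 < n) bern (p2 j0) (oY2 w j0)) * (n`!%:R)^-1)); first by ring.
  rewrite e; ring.
- by move=> w t; rewrite /updS /oS /= fupd_get.
- by move=> w t; rewrite /updS /oS /oY1 /oY2 /oZ /os1 /os2 /= fupdK; case: w => [[[[[? ?] ?] ?] ?] ?].
Qed.

Lemma ExY1 j (g : bool -> R) h :
  (forall w t, h (updY1 w j t) = h w) ->
  Ex (fun w => g (oY1 w j) * h w) = (\sum_b bern (p1 j) b * g b) * Ex h.
Proof.
move=> hE; apply: (resample (upd := fun w t => updY1 w j t)) => //.
- exact: bern_sum.
- move=> w t; rewrite /weight /=.
  have e := prod_fupd (fun l => bern (p1 l)) (oY1 w) j t.
  transitivity ((\prod_l bern (p1 l) (fupd (oY1 w) j t l) * bern (p1 j) (oY1 w j)) *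
    ((\prod_(j0 < n) pS j0 (oS w j0)) *
    (\prod_jp bern (q jp.1 jp.2) (oZ w jp)) * (n`!%:R)^-1 *
    (\prod_(j0 < n) bern (p2 j0) (oY2 w j0)) * (n`!%:R)^-1)); first by ring.
  rewrite e; ring.
- by move=> w t; rewrite /updY1 /oS /oY1 /oY2 /= fupd_get.
- by move=> w t; rewrite /updY1 /oS /oY1 /oY2 /oZ /os1 /os2 /= fupdK; case: w => [[[[[? ?] ?] ?] ?] ?].
Qed.

Lemma ExY2 j (g : bool -> R) h :
  (forall w t, h (updY2 w j t) = h w) ->
  Ex (fun w => g (oY2 w j) * h w) = (\sum_b bern (p2 j) b * g b) * Ex h.
Proof.
move=> hE; apply: (resample (upd := fun w t => updY2 w j t)) => //.
- exact: bern_sum.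
- move=> w t; rewrite /weight /=.
  have e := prod_fupd (fun l => bern (p2 l)) (oY2 w) j t.
  transitivity ((\prod_l bern (p2 l) (fupd (oY2 w) j t l) * bern (p2 j) (oY2 w j)) *
    ((\prod_(j0 < n) pS j0 (oS w j0)) * (\prod_(j0 < n) bern (p1 j0) (oY1 w j0)) *
    (\prod_jp bern (q jp.1 jp.2) (oZ w jp)) * (n`!%:R)^-1 *
     (n`!%:R)^-1)); first by ring.
  rewrite e; ring.
- by move=> w t; rewrite /updY2 /oS /oY1 /oY2 /= fupd_get.
- by move=> w t; rewrite /updY2 /oS /oY1 /oY2 /oZ /os1 /os2 /= fupdK; case: w => [[[[[? ?] ?] ?] ?] ?].
Qed.

End Outcomes.

Lemma sum_pair_mul (R : realFieldType) (A B : finType) (f : A -> R) (g : B -> R) :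
  \sum_(p : A * B) f p.1 * g p.2 = (\sum_a f a) * (\sum_b g b).
Proof.
rewrite -(pair_bigA _ (fun a b => f a * g b)) /= mulr_suml.
by apply: eq_bigr => a _; rewrite mulr_sumr.
Qed.

Lemma sum_ffun_prod (R : realFieldType) (I T : finType) (mu : I -> T -> R) :
  (forall i, \sum_t mu i t = 1) ->
  \sum_(F : {ffun I -> T}) \prod_i mu i (F i) = 1.
Proof.
move=> H; rewrite -(bigA_distr_bigA (fun i t => mu i t)) /=.
by rewrite (eq_bigr (fun _ => 1)) ?big1_eq // => i _; rewrite H.
Qed.

Lemma sum_perm_inv (R : realFieldType) n :
  \sum_(s : {perm 'I_n}) (n`!%:R : R)^-1 = 1.
Proof.
rewrite sumr_const card_Sn -[_ *+ n`!]mulr_natr mulVf // pnatr_eq0 -lt0n.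
exact: fact_gt0.
Qed.

Section Mass.
Variables (R : realFieldType) (n m : nat).
Variables (pS : 'I_n -> {ffun 'I_m -> bool} -> R) (p1 p2 : 'I_n -> R) (q : 'I_n -> 'I_n -> R).
Hypothesis pS1 : forall j, \sum_s pS j s = 1.

Lemma mass1 : Ex pS p1 p2 q (fun _ => 1) = 1.
Proof.
rewrite /Ex.
pose F2 := fun (a : {ffun 'I_n -> {ffun 'I_m -> bool}} * {ffun 'I_n -> bool}) =>
  (\prod_(j < n) pS j (a.1 j)) * (\prod_(j < n) bern (p1 j) (a.2 j)).
pose F3 := fun (a : {ffun 'I_n -> {ffun 'I_m -> bool}} * {ffun 'I_n -> bool} * {ffun 'I_n * 'I_n -> bool}) => F2 a.1 * (\prod_(jp : 'I_n * 'I_n) bern (q jp.1 jp.2) (a.2 jp)).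
pose F4 := fun (a : {ffun 'I_n -> {ffun 'I_m -> bool}} * {ffun 'I_n -> bool} * {ffun 'I_n * 'I_n -> bool} * {perm 'I_n}) => F3 a.1 * (n`!%:R : R)^-1.
pose F5 := fun (a : {ffun 'I_n -> {ffun 'I_m -> bool}} * {ffun 'I_n -> bool} * {ffun 'I_n * 'I_n -> bool} * {perm 'I_n} * {ffun 'I_n -> bool}) => F4 a.1 * (\prod_(j < n) bern (p2 j) (a.2 j)).
transitivity (\sum_(w : outcome n m) F5 w.1 * (n`!%:R : R)^-1).
  by apply: eq_bigr => w _; rewrite mulr1.
rewrite (sum_pair_mul F5 (fun _ => (n`!%:R : R)^-1)) sum_perm_inv mulr1.
rewrite (sum_pair_mul F4 (fun y : {ffun 'I_n -> bool} => \prod_(j < n) bern (p2 j) (y j))).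
rewrite (sum_ffun_prod (mu := fun j => bern (p2 j))) ?mulr1; last by move=> i; exact: bern_sum.
rewrite (sum_pair_mul F3 (fun _ => (n`!%:R : R)^-1)) sum_perm_inv mulr1.
rewrite (sum_pair_mul F2 (fun z : {ffun 'I_n * 'I_n -> bool} => \prod_(jp : 'I_n * 'I_n) bern (q jp.1 jp.2) (z jp))).
rewrite (sum_ffun_prod (mu := fun jp : 'I_n * 'I_n => bern (q jp.1 jp.2))) ?mulr1;
  last by move=> i; exact: bern_sum.
rewrite (sum_pair_mul (fun S : {ffun 'I_n -> {ffun 'I_m -> bool}} => \prod_(j < n) pS j (S j)) (fun y : {ffun 'I_n -> bool} => \prod_(j < n) bern (p1 j) (y j))).
rewrite (sum_ffun_prod (mu := fun j => bern (p1 j))) ?mulr1;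
  last by move=> i; exact: bern_sum.
exact: sum_ffun_prod.
Qed.

Definition before (w : outcome n m) (a b : 'I_n) : bool :=
  (nat_of_ord ((os2 w)^-1%g a) < nat_of_ord ((os2 w)^-1%g b))%N.

Lemma Ex_before a b : a != b -> Ex pS p1 p2 q (fun w => (before w a b)%:R) = 2^-1.
Proof.
move=> ab.
pose sw := fun w : outcome n m => (w.1, (os2 w * tperm a b)%g).
have swK : involutive sw.
  move=> [w1 s] /=; rewrite /sw /os2 /=; congr (_, _).
  by apply/permP => x; rewrite !permM tpermK.
have swi : forall w x, ((os2 (sw w))^-1)%g x = ((os2 w)^-1)%g (tperm a b x).
  move=> w x; rewrite /sw /os2 /= invMg permM tpermV //.
have e : Ex pS p1 p2 q (fun w => (before w a b)%:R) = Ex pS p1 p2 q (fun w => (before w b a)%:R).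
  rewrite /Ex (reindex_inj (inv_inj swK)) /=.
  apply: eq_bigr => w _; rewrite /before swi tpermL swi tpermR.
  by case: w.
have : Ex pS p1 p2 q (fun w => (before w a b)%:R) + Ex pS p1 p2 q (fun w => (before w b a)%:R) = 1.
  transitivity (Ex pS p1 p2 q (fun _ => 1)); last exact: mass1.
  rewrite /Ex -big_split /=; apply: eq_bigr => w _.
  rewrite -mulrDr; congr (_ * _); rewrite /before.
  have : ((os2 w)^-1)%g a != ((os2 w)^-1)%g b by rewrite (inj_eq perm_inj).
  move=> /negbTE ne; rewrite -(inj_eq val_inj) /= in ne.
  by case: ltngtP ne => //= _ _; rewrite ?add0r ?addr0.
rewrite -e => h2.
have -> : Ex pS p1 p2 q (fun w => (before w a b)%:R) = (1 + 1)^-1 * (1 + 1) * Ex pS p1 p2 q (fun w => (before w a b)%:R).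
  by rewrite mulVf ?mul1r // -(natrD R 1 1) pnatr_eq0.
by rewrite -mulrA mulrDl mul1r h2 mulr1.
Qed.

End Mass.

Section Fold.
Variables (n m : nat) (f : 'I_n -> 'I_n) (S : 'I_n -> {ffun 'I_m -> bool})
  (cond : state n m -> 'I_n -> bool).

Definition gstep (st : state n m) (p : 'I_n) : state n m :=
  if cond st p then add_item st (f p) (S (f p)) else st.

Lemma gstep_mono (st : state n m) (p j : 'I_n) : j \in st.2 -> j \in (gstep st p).2.
Proof. by rewrite /gstep; case: ifP => //= _ jin; rewrite in_setU1 jin orbT. Qed.

Lemma gfold_mono (r : seq 'I_n) (st : state n m) (j : 'I_n) : j \in st.2 -> j \in (foldl gstep st r).2.
Proof. by elim: r st => //= p r IH st jin; apply: IH; apply: gstep_mono. Qed.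

Lemma gfold_src (P : 'I_n -> Prop) :
  (forall st p, cond st p -> P p) ->
  forall (r : seq 'I_n) (st : state n m) (j : 'I_n), j \in (foldl gstep st r).2 ->
  j \in st.2 \/ exists2 p, p \in r & (j = f p /\ P p).
Proof.
move=> HP; elim=> [|p r IH] st j //=; first by left.
move=> /IH [|[p' p'r [-> Pp']]]; last by right; exists p' => //; rewrite inE p'r orbT.
rewrite /gstep; case: ifP => [c|_]; last by left.
rewrite /= in_setU1 => /orP [/eqP ->|]; last by left.
by right; exists p; [rewrite inE eqxx | split=> //; apply: HP c].
Qed.

Definition Qv (st : state n m) i := (st.1 i + \sum_(j in st.2) S j i)%N.

Lemma gfold_Q (finj : injective f) (r : seq 'I_n) (st : state n m) (i : 'I_m) :
  uniq r -> (forall p, p \in r -> f p \notin st.2) ->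
  (Qv st i <= Qv (foldl gstep st r) i)%N.
Proof.
elim: r st => //= p r IH st /andP [pr ur] Hr.
have fp : f p \notin st.2 by apply: Hr; rewrite inE eqxx.
apply: (@leq_trans (Qv (gstep st p) i)).
  rewrite /gstep /Qv; case: ifP => // _ /=.
  rewrite big_setU1 //= ffunE addnA leq_add2r.
  case: (S (f p) i) => /=; lia.
apply: IH => // p' p'r.
rewrite /gstep; case: ifP => _ //=; last by apply: Hr; rewrite inE p'r orbT.
rewrite in_setU1 negb_or (inj_eq finj) Hr ?inE ?p'r ?orbT // andbT.
by apply/eqP => e; move: pr; rewrite -e p'r.
Qed.

End Fold.

Section FoldRel.
Variables (n m : nat) (f : 'I_n -> 'I_n) (S S' : 'I_n -> {ffun 'I_m -> bool})
  (cond : state n m -> 'I_n -> bool) (j : 'I_n).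
Hypothesis SS' : forall l, l != j -> S l = S' l.

Definition Rel (st st' : state n m) := (j \in st.2) && (j \in st'.2) || (st == st').

Lemma gfold_rel (r : seq 'I_n) (st st' : state n m) : Rel st st' ->
  Rel (foldl (gstep f S cond) st r) (foldl (gstep f S' cond) st' r).
Proof.
elim: r st st' => //= p r IH st st' H; apply: IH.
move: H; rewrite /Rel => /orP [/andP [h1 h2]|/eqP <-].
  by rewrite !gstep_mono.
rewrite /gstep; case: ifP => _; last by rewrite eqxx orbT.
case: (eqVneq (f p) j) => [->|ne]; first by rewrite /= !in_setU1 !eqxx.
by rewrite SS' // eqxx orbT.
Qed.

Lemma gfold_rel_mem (r : seq 'I_n) (st : state n m) : (j \in (foldl (gstep f S cond) st r).2) =
  (j \in (foldl (gstep f S' cond) st r).2).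
Proof.
have : Rel st st by rewrite /Rel eqxx orbT.
move=> /(gfold_rel r) /orP [/andP [-> ->] //|/eqP -> //].
Qed.
End FoldRel.

Section Key.
Variables (n m : nat) (b : 'I_m -> nat) (C : 'I_n -> {set 'I_m}).

Definition cond1 (w : outcome n m) (st : state n m) (p : 'I_n) :=
  [&& oY1 w (os1 w p), safe (C (os1 w p)) st.1 & oZ w (os1 w p, p)].
Definition cond2 (w : outcome n m) (st : state n m) (p : 'I_n) :=
  [&& safe (C (os2 w p)) st.1, ~~ oY1 w (os2 w p) & oY2 w (os2 w p)].

Lemma fc_fold w : first_chance b C w =
  foldl (gstep (os1 w) (oS w) (cond1 w)) ([ffun i => b i], set0) (enum 'I_n).
Proof. by []. Qed.

Lemma sc_fold w : second_chance b C w =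
  foldl (gstep (os2 w) (oS w) (cond2 w)) ((first_chance b C w).1, set0) (enum 'I_n).
Proof. by []. Qed.

Definition Fn (w : outcome n m) i := (\sum_(j' in (first_chance b C w).2) oS w j' i)%N.
Definition Gn (w : outcome n m) j i :=
  (\sum_j' (oS w j' i && oY2 w j' && before w j' j))%N.

Lemma fc_Q w i : (b i <= (first_chance b C w).1 i + Fn w i)%N.
Proof.
have := @gfold_Q n m (os1 w) (oS w) (cond1 w) (@perm_inj _ _) (enum 'I_n)
  ([ffun i => b i], set0) i (enum_uniq _).
rewrite /Qv /= big_set0 ffunE addn0 -fc_fold; apply.
by move=> p _; rewrite in_set0.
Qed.

Lemma key w j : oY2 w j -> ~~ oY1 w j -> ~~ ad2 b C j w ->
  exists2 i, i \in C j & (b i <= Fn w i + Gn w j i)%N.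
Proof.
move=> y2 y1 nad.
set p0 := ((os2 w)^-1)%g j.
have [r1 [r2 Henum]] : exists r1 r2, enum 'I_n = r1 ++ p0 :: r2.
  have pin : p0 \in enum 'I_n by rewrite mem_enum.
  exists (take (index p0 (enum 'I_n)) (enum 'I_n)), (drop (index p0 (enum 'I_n)).+1 (enum 'I_n)).
  have e1 := drop_nth p0 (etrans (index_mem p0 (enum 'I_n)) pin).
  by rewrite nth_index // in e1; rewrite -e1 cat_take_drop.
have uq := enum_uniq (pred_of_simpl (@predT 'I_n)).
rewrite Henum cat_uniq /= in uq.
case/and3P: uq => ur1 /norP [p0r1 _] _.
set mid := foldl (gstep (os2 w) (oS w) (cond2 w)) ((first_chance b C w).1, set0) r1.
have fp0 : os2 w p0 = j by rewrite /p0 permKV.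
have nsafe : ~~ safe (C j) mid.1.
  apply/negP => sf; move: nad; rewrite /ad2 sc_fold Henum foldl_cat /= -/mid.
  rewrite gfold_mono // /gstep /cond2 fp0 sf y1 y2 /= in_setU1 eqxx //.
case/forall_inPn: nsafe => i iC; rewrite -eqn0Ngt => /eqP mid0.
exists i => //.
have Q1 := fc_Q w i.
have Q2 := @gfold_Q n m (os2 w) (oS w) (cond2 w) (@perm_inj _ _) r1
  ((first_chance b C w).1, set0) i ur1 (fun p _ => negbT (in_set0 _)).
rewrite /Qv /= big_set0 addn0 -/mid mid0 add0n in Q2.
apply: (leq_trans Q1); rewrite addnC leq_add2l.
apply: (leq_trans Q2).
rewrite [X in (X <= _)%N](big_mkcond) /Gn; apply: leq_sum => j' _.
case: ifP => // j'in.
have HP : forall st p, cond2 w st p -> oY2 w (os2 w p) by move=> st p /and3P [].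
have := @gfold_src n m (os2 w) (oS w) (cond2 w) (fun p => oY2 w (os2 w p)) HP r1 _ j' j'in.
move=> [H|[p pr1 [e y2p]]]; first by rewrite in_set0 in H.
rewrite e y2p andbT /before permK -/p0.
case: (oS w (os2 w p) i) => //=.
have := index_mem p r1; rewrite pr1 => lt.
have := index_enum_ord p; have := index_enum_ord p0.
rewrite Henum !index_cat pr1 (negbTE p0r1) /= eqxx addn0 => <- <-.
by rewrite lt.
Qed.
End Key.

Lemma ad1_updS n m (b : 'I_m -> nat) (C : 'I_n -> {set 'I_m}) (w : outcome n m) j' t :
  ad1 b C j' (updS w j' t) = ad1 b C j' w.
Proof.
rewrite /ad1 !fc_fold.
have H : forall l, l != j' -> oS (updS w j' t) l = oS w l.
  by move=> l ne; rewrite /updS /oS /= fupd_other.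
exact: (@gfold_rel_mem n m (os1 w) (oS (updS w j' t)) (oS w) (cond1 C w) j' H).
Qed.

Section ExLemmas.
Variables (R : realFieldType) (n m : nat).
Variables (pS : 'I_n -> {ffun 'I_m -> bool} -> R) (p1 p2 : 'I_n -> R) (q : 'I_n -> 'I_n -> R).
Local Notation E := (Ex pS p1 p2 q).

Lemma Ex_ext f g : (forall w, f w = g w) -> E f = E g.
Proof. by move=> H; apply: eq_bigr => w _; rewrite H. Qed.

Lemma Ex_sum (I : finType) (F : I -> outcome n m -> R) :
  E (fun w => \sum_i F i w) = \sum_i E (F i).
Proof.
rewrite /Ex exchange_big /=; apply: eq_bigr => w _; by rewrite mulr_sumr.
Qed.

Lemma Ex_sub f g : E (fun w => f w - g w) = E f - E g.
Proof. by rewrite /Ex -sumrB; apply: eq_bigr => w _; rewrite mulrBr. Qed.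

Lemma Ex_scale c f : E (fun w => c * f w) = c * E f.
Proof. by rewrite /Ex mulr_sumr; apply: eq_bigr => w _; rewrite mulrCA. Qed.

Lemma bern_ge0 (p : R) bb : 0 <= p <= 1 -> 0 <= bern p bb.
Proof. by case/andP=> h0 h1; case: bb => //=; rewrite subr_ge0. Qed.

Hypothesis pS0 : forall j s, 0 <= pS j s.
Hypothesis p1r : forall j, 0 <= p1 j <= 1.
Hypothesis p2r : forall j, 0 <= p2 j <= 1.
Hypothesis qr : forall j p, 0 <= q j p <= 1.

Lemma weight_ge0 w : 0 <= weight pS p1 p2 q w.
Proof.
rewrite /weight; rewrite !mulr_ge0 ?invr_ge0 ?ler0n //; apply: prodr_ge0 => *;
  by rewrite ?pS0 ?bern_ge0.
Qed.

Lemma Ex_le f g : (forall w, f w <= g w) -> E f <= E g.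
Proof. by move=> H; apply: ler_sum => w _; rewrite ler_wpM2l ?weight_ge0. Qed.
End ExLemmas.

Lemma Ex_sumP (R : realFieldType) n m pS p1 p2 q (I : finType) (P : pred I)
  (F : I -> outcome n m -> R) :
  Ex pS p1 p2 q (fun w => \sum_(i | P i) F i w) = \sum_(i | P i) Ex pS p1 p2 q (F i).
Proof.
rewrite /Ex exchange_big /=; apply: eq_bigr => w _; by rewrite mulr_sumr.
Qed.

Lemma Ex_add (R : realFieldType) n m pS p1 p2 q (f g : outcome n m -> R) :
  Ex pS p1 p2 q (fun w => f w + g w) = Ex pS p1 p2 q f + Ex pS p1 p2 q g.
Proof. by rewrite /Ex -big_split; apply: eq_bigr => w _; rewrite mulrDr. Qed.

Lemma LB_le (R : realFieldType) n m (b : 'I_m -> nat) (C : 'I_n -> {set 'I_m}) j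
  (w : outcome n m) : (forall i, (0 < b i)%N) ->
  (oY2 w j)%:R * (1 - (oY1 w j)%:R) -
  \sum_(i in C j) ((b i)%:R)^-1 * ((oY2 w j)%:R * (Fn b C w i)%:R + (oY2 w j)%:R * (Gn w j i)%:R)
  <= (ad2 b C j w)%:R :> R.
Proof.
move=> bpos.
have bR : forall i, 0 < (b i)%:R :> R by move=> i; rewrite ltr0n.
have T0 : 0 <= \sum_(i in C j) ((b i)%:R)^-1 * ((oY2 w j)%:R * (Fn b C w i)%:R +
    (oY2 w j)%:R * (Gn w j i)%:R) :> R.
  by apply: sumr_ge0 => i _; rewrite mulr_ge0 ?invr_ge0 ?ler0n ?addr_ge0 ?mulr_ge0 ?ler0n.
move: T0; case y2: (oY2 w j) => T0; last first.
  by rewrite mul0r sub0r; apply: (le_trans _ (ler0n _ _)); rewrite oppr_le0.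
case y1: (oY1 w j).
  by rewrite subrr mulr0 sub0r; apply: (le_trans _ (ler0n _ _)); rewrite oppr_le0.
case ad: (ad2 b C j w).
  by rewrite subr0 mulr1 lerBlDr lerDl.
have [i iC hi] := key (introT idP y2) (negbT y1) (negbT ad).
rewrite subr0 mulr1 subr_le0 (bigD1 i) //=.
apply: ler_wpDr; first by apply: sumr_ge0 => l _; rewrite mulr_ge0 ?invr_ge0 ?ler0n ?addr_ge0 ?mulr_ge0 ?ler0n.
by rewrite !mul1r ler_pdivlMl // mulr1 -natrD ler_nat.
Qed.

Theorem lemma4 (R : realFieldType) (n m k : nat)
  (b : 'I_m -> nat) (C : 'I_n -> {set 'I_m})
  (pS : 'I_n -> {ffun 'I_m -> bool} -> R) (w : 'I_n -> R)
  (x : 'I_n -> R) (alpha1 beta1 alpha2 : R) (q : 'I_n -> 'I_n -> R) :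
  (0 < k)%N ->
  (forall i, (0 < b i)%N) ->
  (forall j, (#|C j| <= k)%N) ->
  (forall j s, 0 <= pS j s) ->
  (forall j, \sum_(s : {ffun 'I_m -> bool}) pS j s = 1) ->
  (forall j s, pS j s != 0 -> forall i, i \notin C j -> s i = false) ->
  (forall j, 0 <= w j) ->
  lp_optimal pS b w x ->
  0 <= alpha1 -> 0 <= alpha2 -> 0 <= beta1 -> beta1 <= alpha1 * (1 - alpha1 / 2) ->
  (forall j, alpha1 * x j / k%:R <= 1) ->
  (forall j, alpha2 * x j / k%:R <= 1) ->
  (forall j p, 0 <= q j p <= 1) ->
  (forall j, Pr pS (fun j => alpha1 * x j / k%:R) (fun j => alpha2 * x j / k%:R) q
               (ad1 b C j) = beta1 * x j / k%:R) ->
  forall j : 'I_n,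
    x j / k%:R * alpha2 * (1 - alpha1 * x j / k%:R - beta1 - alpha2 / 2)
    <= Pr pS (fun j => alpha1 * x j / k%:R) (fun j => alpha2 * x j / k%:R) q
          (ad2 b C j).
Proof.
move=> k0 bpos Ck pS0 pS1 _ _ [[xr lpb] _] a10 a20 b10 _ p1le p2le qr had1 j.
set P1 := (fun j => alpha1 * x j / k%:R) in had1 *.
set P2 := (fun j => alpha2 * x j / k%:R) in had1 *.
have kR : 0 < k%:R :> R by rewrite ltr0n.
have x0 : forall j, 0 <= x j by move=> j'; case/andP: (xr j').
have p1r : forall j, 0 <= P1 j <= 1.
  by move=> j'; rewrite p1le andbT /P1 divr_ge0 ?mulr_ge0 ?x0 // ltW.
have p2r : forall j, 0 <= P2 j <= 1.
  by move=> j'; rewrite p2le andbT /P2 divr_ge0 ?mulr_ge0 ?x0 // ltW.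
have u0 : forall i j', 0 <= umean pS i j'.
  by move=> i j'; apply: sumr_ge0 => s _; rewrite mulr_ge0 ?ler0n.
have bernE : forall p : R, \sum_bb bern p bb * (bb%:R) = p.
  by move=> p; rewrite big_bool /=; ring.
pose E := Ex pS P1 P2 q.
have mass := @mass1 R n m pS P1 P2 q pS1.
have E1 : E (fun o => (oY2 o j)%:R * (1 - (oY1 o j)%:R)) = P2 j * (1 - P1 j).
  rewrite /E (@ExY2 R n m pS P1 P2 q j (fun bb => bb%:R) (fun o => 1 - (oY1 o j)%:R)) //.
  rewrite bernE; congr (_ * _).
  transitivity (Ex pS P1 P2 q (fun o => (fun bb : bool => 1 - bb%:R) (oY1 o j) * 1)).
    by apply: Ex_ext => o; rewrite mulr1.
  rewrite (@ExY1 R n m pS P1 P2 q j (fun bb : bool => 1 - bb%:R) (fun _ => 1)) // mass mulr1.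
  by rewrite big_bool /=; ring.
have E2 : forall i, E (fun o => (oY2 o j)%:R * (Fn b C o i)%:R) =
    P2 j * \sum_j' umean pS i j' * (beta1 * x j' / k%:R).
  move=> i.
  rewrite /E (@ExY2 R n m pS P1 P2 q j (fun bb => bb%:R) (fun o => (Fn b C o i)%:R)) //.
  rewrite bernE; congr (_ * _).
  transitivity (Ex pS P1 P2 q (fun o => \sum_j' (fun s : {ffun 'I_m -> bool} => (s i)%:R) (oS o j') * (ad1 b C j' o)%:R)).
    apply: Ex_ext => o; rewrite /Fn natr_sum big_mkcond /=; apply: eq_bigr => j' _.
    by rewrite /ad1; case: (j' \in _); rewrite ?mulr1 ?mulr0.
  rewrite Ex_sum; apply: eq_bigr => j' _.
  rewrite (@ExS R n m pS P1 P2 q j' (fun s : {ffun 'I_m -> bool} => (s i)%:R) (fun o => (ad1 b C j' o)%:R) (pS1 j')).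
    by rewrite -had1.
  by move=> o t; rewrite ad1_updS.
have E3 : forall i, E (fun o => (oY2 o j)%:R * (Gn o j i)%:R) <=
    P2 j * \sum_j' umean pS i j' * (P2 j' / 2).
  move=> i.
  rewrite /E (@ExY2 R n m pS P1 P2 q j (fun bb => bb%:R) (fun o => (Gn o j i)%:R)); last first.
    move=> o t; rewrite /Gn; congr (_%:R); apply: eq_bigr => j' _.
    case: (eqVneq j' j) => [->|ne]; first by rewrite /before ltnn !andbF.
    by rewrite /updY2 {1}/oY2 /= fupd_other.
  rewrite bernE ler_wpM2l ?(andP (p2r j)).1 //.
  have bM : forall a c : bool, ((a && c)%:R : R) = a%:R * c%:R.
    by case; case; rewrite ?mul1r ?mul0r.
  have -> : Ex pS P1 P2 q (fun o => (Gn o j i)%:R) = (Ex pS P1 P2 q (fun o => \sum_j' (fun s : {ffun 'I_m -> bool} => (s i)%:R) (oS o j') *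
       ((oY2 o j')%:R * (before o j' j)%:R))).
    by apply: Ex_ext => o; rewrite /Gn natr_sum; apply: eq_bigr => j' _; rewrite !bM mulrA.
  rewrite Ex_sum; apply: ler_sum => j' _.
  case: (eqVneq j' j) => [->|ne].
    rewrite (@Ex_ext R n m pS P1 P2 q _ (fun _ => 0)); last first.
      by move=> o; rewrite /before ltnn mulr0 mulr0.
    rewrite /Ex big1; last by move=> o _; exact: mulr0.
    by apply: mulr_ge0; [exact: u0 | apply: divr_ge0 => //; exact: (andP (p2r j)).1].
  rewrite (@ExS R n m pS P1 P2 q j' (fun s : {ffun 'I_m -> bool} => (s i)%:R) (fun o => (oY2 o j')%:R * (before o j' j)%:R) (pS1 j')) //.
  rewrite (@ExY2 R n m pS P1 P2 q j' (fun bb => bb%:R) (fun o => (before o j' j)%:R)) //.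
  by rewrite bernE (@Ex_before R n m pS P1 P2 q pS1 j' j ne).
pose c := (beta1 + alpha2 / 2) / k%:R.
have c0 : 0 <= c.
  rewrite /c; apply: divr_ge0; last exact: ltW.
  by apply: addr_ge0 => //; apply: divr_ge0 => //; exact: ler0n.
have P2j0 : 0 <= P2 j by case/andP: (p2r j).
have Bi : forall i, ((b i)%:R)^-1 * (E (fun o => (oY2 o j)%:R * (Fn b C o i)%:R) +
    E (fun o => (oY2 o j)%:R * (Gn o j i)%:R)) <= P2 j * c.
  move=> i; rewrite E2.
  have bR : 0 < (b i)%:R :> R by rewrite ltr0n.
  rewrite ler_pdivrMl //.
  apply: le_trans (lerD (lexx _) (E3 i)) _.
  rewrite -mulrDr -big_split /=.
  have -> : \sum_j' (umean pS i j' * (beta1 * x j' / k%:R) + umean pS i j' * (P2 j' / 2))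
      = c * \sum_(j' < n) umean pS i j' * x j'.
    rewrite mulr_sumr; apply: eq_bigr => j' _; rewrite /c /P2; ring.
  by rewrite mulrA [(b i)%:R * _]mulrC ler_wpM2l ?(mulr_ge0 P2j0 c0) ?lpb.
have LB := @Ex_le R n m pS P1 P2 q pS0 p1r p2r qr (fun o => (oY2 o j)%:R * (1 - (oY1 o j)%:R) -
  \sum_(i in C j) ((b i)%:R)^-1 * ((oY2 o j)%:R * (Fn b C o i)%:R + (oY2 o j)%:R * (Gn o j i)%:R)) (fun o => (ad2 b C j o)%:R)
   (fun o => @LB_le R n m b C j o bpos).
apply: (le_trans _ LB).
rewrite /E in E1 Bi.
rewrite Ex_sub E1 Ex_sumP.
have -> : \sum_(i in C j) Ex pS P1 P2 q (fun o => ((b i)%:R)^-1 * ((oY2 o j)%:R * (Fn b C o i)%:R +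
     (oY2 o j)%:R * (Gn o j i)%:R)) = \sum_(i in C j) ((b i)%:R)^-1 * (Ex pS P1 P2 q (fun o => (oY2 o j)%:R * (Fn b C o i)%:R) +
    Ex pS P1 P2 q (fun o => (oY2 o j)%:R * (Gn o j i)%:R)).
  by apply: eq_bigr => i _; rewrite Ex_scale Ex_add.
apply: le_trans (lerB (lexx _) (ler_sum _ (fun i _ => Bi i))).
rewrite sumr_const.
apply: le_trans (lerB (lexx _) (_ : P2 j * c *+ #|C j| <= P2 j * c * k%:R)) => /=; last first.
  by rewrite -mulr_natr ler_wpM2l ?(mulr_ge0 P2j0 c0) // ler_nat.
rewrite /P2 /P1 /c le_eqVlt; apply/orP; left; apply/eqP.
field; by rewrite pnatr_eq0 -lt0n.
Qed.
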